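(* There exist at least two inequivalent extremal Type~II $\mathbb{Z}_4$-codes of length $40$ whose residue codes have dimension $7$.
   Context: A $\mathbb{Z}_4$-code of length $n$ is a $\mathbb{Z}_4$-submodule of $\mathbb{Z}_4^n$; it is self-dual if it equals its dual with respect to $x\cdot y=\sum x_iy_i \pmod 4$. The Euclidean weight of $x$ is $n_1(x)+4n_2(x)+n_3(x)$, $n_\alpha(x)$ being the number of coordinates equal to $\alpha$. A Type~II $\mathbb{Z}_4$-code is a self-dual code all of whose codewords have Euclidean weight divisible by $8$; it is extremal if its minimum Euclidean weight equals $8\lfloor n/24\rfloor+8$ (so $16$ for $n=40$). The residue code is $C^{(1)}=\{c\bmod 2: c\in C\}$. Two $\mathbb{Z}_4$-codes are equivalent if one can be obtained from the other by permuting coordinates and changing the signs of some coordinates. *)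

(* Defs.v *)
From HB Require Import structures.
From mathcomp Require Import all_boot all_order all_fingroup all_algebra.
Set Implicit Arguments. Unset Strict Implicit. Unset Printing Implicit Defensive.
Import GRing.Theory.
Local Open Scope ring_scope.

Section Z4Codes.
Variable n : nat.
Notation vec := 'rV['Z_4]_n.

Definition is_Z4code (C : {set vec}) : Prop :=
  [/\ 0 \in C,
      (forall x y, x \in C -> y \in C -> x + y \in C) &
      (forall (a : 'Z_4) x, x \in C -> a *: x \in C)].

Definition z4dot (x y : vec) : 'Z_4 := \sum_(i < n) x ord0 i * y ord0 i.

Definition z4dual (C : {set vec}) : {set vec} :=
  [set y | [forall x in C, z4dot x y == 0]].

Definition self_dual (C : {set vec}) : Prop := is_Z4code C /\ C = z4dual C.

Definition ew_coord (a : 'Z_4) : nat :=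
  match val a with 0 => 0 | 1 => 1 | 2 => 4 | _ => 1 end%N.

Definition euclid_wt (x : vec) : nat := (\sum_(i < n) ew_coord (x ord0 i))%N.

Definition typeII (C : {set vec}) : Prop :=
  self_dual C /\ (forall x, x \in C -> 8 %| euclid_wt x)%N.

Definition min_euclid_wt (C : {set vec}) (d : nat) : Prop :=
  (exists2 x, x \in C & x != 0%R /\ euclid_wt x = d) /\
  (forall x, x \in C -> x != 0%R -> d <= euclid_wt x)%N.

Definition extremal_typeII (C : {set vec}) : Prop :=
  typeII C /\ min_euclid_wt C (8 * (n %/ 24) + 8)%N.

Definition red2 (a : 'Z_4) : 'F_2 := ((val a) %% 2)%:R.

Definition residue (C : {set vec}) : {set 'rV['F_2]_n} :=
  [set map_mx red2 c | c : vec in C].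

Definition residue_dim (C : {set vec}) : nat := \dim <<enum (residue C)>>%VS.

Definition z4equiv (C D : {set vec}) : Prop :=
  exists (s : 'S_n) (e : 'I_n -> bool),
    D = [set \row_i ((-1) ^+ e i * c ord0 (s i)) | c : vec in C].

End Z4Codes.

(* Main.v *)
Require Import Defs.
From mathcomp Require Import all_boot all_order all_fingroup all_algebra zify.
Set Implicit Arguments. Unset Strict Implicit. Unset Printing Implicit Defensive.
Import GRing.Theory.
Local Open Scope ring_scope.

Notation vec := 'rV['Z_4]_40.

Lemma vD (a b : 'Z_4) : val (a + b) = ((val a + val b) %% 4)%N.
Proof. by []. Qed.
Lemma vM (a b : 'Z_4) : val (a * b) = ((val a * val b) %% 4)%N.
Proof. by []. Qed.
Lemma vinZp n : val (inZp n : 'Z_4) = (n %% 4)%N.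
Proof. by []. Qed.

Lemma modn_sum n d (F : 'I_n -> nat) :
  ((\sum_(i < n) (F i %% d)) %% d = (\sum_(i < n) F i) %% d)%N.
Proof.
elim/big_rec2: _ => [//|i x y _ IH].
by rewrite -modnDm IH modnDm modnDml.
Qed.

Lemma vsum n (F : 'I_n -> 'Z_4) :
  val (\sum_(i < n) F i) = ((\sum_(i < n) val (F i)) %% 4)%N.
Proof.
elim/big_rec2: _ => [//|i x y _ IH].
by rewrite vD IH modnDmr.
Qed.

Lemma val_dot (x y : vec) :
  val (z4dot x y) = ((\sum_(k < 40) val (x ord0 k) * val (y ord0 k)) %% 4)%N.
Proof.
rewrite /z4dot vsum.
under eq_bigr do rewrite vM.
by rewrite modn_sum.
Qed.

Lemma sum_iota n (f : nat -> nat) :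
  (\sum_(k < n) f (nat_of_ord k) = sumn [seq f k | k <- iota 0 n])%N.
Proof.
by rewrite sumnE big_map -(big_mkord xpredT f) /index_iota subn0.
Qed.

Lemma z4dotC (x y : vec) : z4dot x y = z4dot y x.
Proof. by apply: eq_bigr => i _; rewrite mulrC. Qed.
Lemma z4dotDr (x y z : vec) : z4dot x (y + z) = z4dot x y + z4dot x z.
Proof. by rewrite /z4dot -big_split; apply: eq_bigr => i _; rewrite mxE mulrDr. Qed.
Lemma z4dotZr (x y : vec) a : z4dot x (a *: y) = a * z4dot x y.
Proof. by rewrite /z4dot mulr_sumr; apply: eq_bigr => i _; rewrite mxE mulrCA. Qed.
Lemma z4dot0r (x : vec) : z4dot x 0 = 0.
Proof. by rewrite /z4dot big1 // => i _; rewrite mxE mulr0. Qed.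
Lemma z4dotNr (x y : vec) : z4dot x (- y) = - z4dot x y.
Proof. by rewrite /z4dot -sumrN; apply: eq_bigr => i _; rewrite mxE mulrN. Qed.
Lemma z4dotBr (x y z : vec) : z4dot x (y - z) = z4dot x y - z4dot x z.
Proof. by rewrite z4dotDr z4dotNr. Qed.
Lemma z4dot_sumr (x : vec) n (F : 'I_n -> vec) :
  z4dot x (\sum_(i < n) F i) = \sum_(i < n) z4dot x (F i).
Proof.
elim/big_rec2: _ => [|i y z _ IH]; first exact: z4dot0r.
by rewrite z4dotDr IH.
Qed.

Lemma t1b (a b : 'Z_4) : (a + a == 0) ==> (b + b == 0) ==> (a * b == 0).
Proof. by move: a b => [[|[|[|[|m]]]] Hm] [[|[|[|[|n]]]] Hn]. Qed.
Lemma t1 (a b : 'Z_4) : a + a = 0 -> b + b = 0 -> a * b = 0.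
Proof. by move=> /eqP Ha /eqP Hb; move: (t1b a b); rewrite Ha Hb => /eqP. Qed.

Lemma mulz_bool (a : 'Z_4) (b : bool) :
  a * inZp (nat_of_bool b) = if b then a else 0.
Proof.
case: b.
  by rewrite (_ : inZp 1 = 1) ?mulr1 //; apply: val_inj.
by rewrite (_ : inZp 0 = 0) ?mulr0 //; apply: val_inj.
Qed.

Lemma sum_delta n (k0 : 'I_n) (F : 'I_n -> 'Z_4) v :
  (forall k, F k = if k == k0 then v else 0) -> \sum_(k < n) F k = v.
Proof.
move=> HF; rewrite (bigD1 k0) //= HF eqxx big1 ?addr0 // => i /negPf Hi.
by rewrite HF Hi.
Qed.

Fixpoint allbits n (P : seq nat -> bool) : bool :=
  if n is n'.+1 then allbits n' (fun l => P (0%N :: l)) && allbits n' (fun l => P (1%N :: l))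
  else P [::].

Lemma allbitsP n P l : allbits n P -> size l = n -> all (fun x => x <= 1)%N l -> P l.
Proof.
elim: n P l => [|n IH] P [|x l] //=.
move=> /andP [H0 H1] [Hs] /andP [Hx Hl].
case: x Hx => [_|[_|//]].
  exact: (IH (fun l => P (0%N :: l))).
exact: (IH (fun l => P (1%N :: l))).
Qed.

Definition tab (T : seq (seq nat)) i k := nth 0%N (nth [::] T i) k.
Definition Gn (RT TT : seq (seq nat)) i k :=
  if (i < 7)%N then tab RT i k else (2 * tab TT (i - 7) k)%N.
Definition genn RT TT i : vec := \row_(k < 40) (inZp (Gn RT TT i k) : 'Z_4).
Definition ttn TT j : vec := \row_(k < 40) (inZp (tab TT j k) : 'Z_4).
Definition Code RT TT : {set vec} :=
  [set x | [forall i : 'I_40, z4dot (genn RT TT i) x == 0]].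

Definition chk_orth RT TT := all (fun i => all (fun j =>
  (sumn [seq (Gn RT TT i k %% 4) * (Gn RT TT j k %% 4) | k <- iota 0 40] %% 4 == 0)%N)
  (iota 0 40)) (iota 0 40).
Definition chk_Rid RT := all (fun i => all (fun k => tab RT i k == (i == k) :> nat)
  (iota 0 7)) (iota 0 7).
Definition chk_Tid TT := all (fun j => all (fun l => tab TT j (7 + l) == (j == l) :> nat)
  (iota 0 33)) (iota 0 33).

Lemma inCode RT TT x :
  (x \in Code RT TT) = [forall i : 'I_40, z4dot (genn RT TT i) x == 0].
Proof. by rewrite inE. Qed.

Lemma inCodeP RT TT x :
  reflect (forall i : 'I_40, z4dot (genn RT TT i) x = 0) (x \in Code RT TT).
Proof.
rewrite inCode; apply: (iffP forallP) => H i; first exact/eqP.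
exact/eqP.
Qed.

Lemma dot_gen_gen RT TT (Ho : chk_orth RT TT) (i j : 'I_40) :
  z4dot (genn RT TT i) (genn RT TT j) = 0.
Proof.
apply: val_inj; rewrite val_dot /=.
under eq_bigr do rewrite !mxE !vinZp.
rewrite (sum_iota 40 (fun k => (Gn RT TT i k %% 4) * (Gn RT TT j k %% 4))%N).
move/allP: Ho => /(_ i); rewrite mem_iota ltn_ord => /(_ isT) /allP /(_ j).
by rewrite mem_iota ltn_ord => /(_ isT) /eqP.
Qed.

Lemma Code_gen RT TT (Ho : chk_orth RT TT) (i : 'I_40) : genn RT TT i \in Code RT TT.
Proof. by apply/inCodeP => j; rewrite dot_gen_gen. Qed.

Lemma Code0 RT TT : 0 \in Code RT TT.
Proof. by apply/inCodeP => j; rewrite z4dot0r. Qed.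
Lemma CodeD RT TT x y : x \in Code RT TT -> y \in Code RT TT -> x + y \in Code RT TT.
Proof. by move=> /inCodeP Hx /inCodeP Hy; apply/inCodeP => j; rewrite z4dotDr Hx Hy addr0. Qed.
Lemma CodeZ RT TT a x : x \in Code RT TT -> a *: x \in Code RT TT.
Proof. by move=> /inCodeP Hx; apply/inCodeP => j; rewrite z4dotZr Hx mulr0. Qed.
Lemma CodeN RT TT x : x \in Code RT TT -> - x \in Code RT TT.
Proof. by move=> /inCodeP Hx; apply/inCodeP => j; rewrite z4dotNr Hx oppr0. Qed.
Lemma CodeB RT TT x y : x \in Code RT TT -> y \in Code RT TT -> x - y \in Code RT TT.
Proof. by move=> Hx Hy; apply: CodeD => //; apply: CodeN. Qed.
Lemma CodeS RT TT n (F : 'I_n -> vec) :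
  (forall i, F i \in Code RT TT) -> \sum_(i < n) F i \in Code RT TT.
Proof.
move=> HF; elim/big_rec: _ => [|i x _ Hx]; first exact: Code0.
exact: CodeD.
Qed.

Lemma tabR RT (HR : chk_Rid RT) i k : (i < 7)%N -> (k < 7)%N -> tab RT i k = (i == k).
Proof.
move=> Hi Hk; move/allP: HR => /(_ i); rewrite mem_iota Hi => /(_ isT) /allP /(_ k).
by rewrite mem_iota Hk => /(_ isT) /eqP.
Qed.
Lemma tabT TT (HT : chk_Tid TT) j l : (j < 33)%N -> (l < 33)%N -> tab TT j (7 + l) = (j == l).
Proof.
move=> Hj Hl; move/allP: HT => /(_ j); rewrite mem_iota Hj => /(_ isT) /allP /(_ l).
by rewrite mem_iota Hl => /(_ isT) /eqP.
Qed.

Lemma tt2 RT TT j : ttn TT j + ttn TT j = genn RT TT (7 + j).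
Proof.
apply/rowP => k; rewrite !mxE /Gn ltnNge leq_addr /= addKn.
apply: val_inj; rewrite vD !vinZp modnDm.
by rewrite addnn -mul2n.
Qed.

Definition acoef (x : vec) (i : 'I_7) : 'Z_4 := x ord0 (inord i).
Definition y1 RT TT x := x - \sum_(i < 7) acoef x i *: genn RT TT i.
Definition ccoef RT TT x (j : 'I_33) := y1 RT TT x ord0 (inord (7 + j)).
Definition y2 RT TT x := y1 RT TT x - \sum_(j < 33) ccoef RT TT x j *: ttn TT j.

Lemma mul2bool (a : 'Z_4) (b : bool) :
  (inZp (2 * nat_of_bool b) : 'Z_4) * a = if b then a + a else 0.
Proof. by case: b; move: a => [[|[|[|[|m]]]] Hm]; apply: val_inj. Qed.

Lemma inordK40 k : (k < 40)%N -> nat_of_ord (inord k : 'I_40) = k.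
Proof. exact: inordK. Qed.
Lemma inordK33 k : (k < 33)%N -> nat_of_ord (inord k : 'I_33) = k.
Proof. exact: inordK. Qed.

Lemma dot_gen_gen_nat RT TT (Ho : chk_orth RT TT) i j : (i < 40)%N -> (j < 40)%N ->
  z4dot (genn RT TT i) (genn RT TT j) = 0.
Proof.
move=> Hi Hj; have := dot_gen_gen Ho (inord i) (inord j).
by rewrite !inordK40.
Qed.

Lemma y1_low RT TT (HR : chk_Rid RT) x (k : 'I_40) : (k < 7)%N -> y1 RT TT x ord0 k = 0.
Proof.
move=> Hk; rewrite /y1 !mxE summxE.
rewrite (@sum_delta _ (Ordinal Hk) _ (x ord0 k)) ?subrr // => i.
rewrite !mxE /Gn (ltn_ord i) (tabR HR (ltn_ord i) Hk) mulz_bool.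
case: eqP => [Hik|Hik]; case: eqP => [Hik'|Hik'] //.
- by rewrite /acoef Hik inord_val.
- by exfalso; apply: Hik'; apply: val_inj.
- by exfalso; apply: Hik; rewrite Hik'.
Qed.

Lemma y1_Code RT TT (Ho : chk_orth RT TT) x : x \in Code RT TT -> y1 RT TT x \in Code RT TT.
Proof.
move=> Hx; apply: CodeB => //; apply: CodeS => i; apply: CodeZ.
have := Code_gen Ho (widen_ord (isT : (7 <= 40)%N) i); by [].
Qed.

Lemma cc2 RT TT (Ho : chk_orth RT TT) (HR : chk_Rid RT) (HT : chk_Tid TT) x (j : 'I_33) :
  x \in Code RT TT -> ccoef RT TT x j + ccoef RT TT x j = 0.
Proof.
move=> Hx; have Hj : (7 + j < 40)%N by have := ltn_ord j; lia.
have /inCodeP /(_ (inord (7 + j))) := y1_Code Ho Hx.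
rewrite /z4dot => H; rewrite -H; symmetry.
apply: (@sum_delta _ (inord (7 + j))) => k.
rewrite [X in X * _]mxE /Gn inordK40 // ltnNge leq_addr /= addKn.
case: (ltnP k 7) => Hk.
  rewrite y1_low // mulr0; case: eqP => // Hk'.
  by move: Hk; rewrite Hk' inordK40 //; lia.
have Hk2 : (k - 7 < 33)%N by have := ltn_ord k; lia.
have -> : nat_of_ord k = (7 + (k - 7))%N by lia.
rewrite (tabT HT (ltn_ord j) Hk2) mul2bool.
have E : (nat_of_ord j == (k - 7)%N) = (k == inord (7 + j)).
  apply/eqP/eqP => [E|E].
    by apply: val_inj => /=; rewrite inordK40 //; lia.
  by move/(congr1 val): E => /=; rewrite inordK40 //; lia.
rewrite E; case: ifP => // /eqP Hk'.
by rewrite /ccoef -Hk'.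
Qed.

Lemma ttZ_Code RT TT (Ho : chk_orth RT TT) c (j : 'I_33) :
  c + c = 0 -> c *: ttn TT j \in Code RT TT.
Proof.
move=> Hc; apply/inCodeP => i; rewrite z4dotZr; apply: t1 => //.
rewrite -z4dotDr (tt2 RT) dot_gen_gen_nat //.
by have := ltn_ord j; lia.
Qed.

Lemma y2_Code RT TT (Ho : chk_orth RT TT) (HR : chk_Rid RT) (HT : chk_Tid TT) x :
  x \in Code RT TT -> y2 RT TT x \in Code RT TT.
Proof.
move=> Hx; apply: CodeB; first exact: y1_Code.
by apply: CodeS => j; apply: ttZ_Code => //; apply: cc2.
Qed.

Lemma y2_high RT TT (HR : chk_Rid RT) (HT : chk_Tid TT) x (k : 'I_40) :
  (7 <= k)%N -> y2 RT TT x ord0 k = 0.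
Proof.
move=> Hk; have Hk2 : (k - 7 < 33)%N by have := ltn_ord k; lia.
rewrite /y2 /ccoef; move: (y1 RT TT x) => Y.
rewrite !mxE summxE (@sum_delta _ (inord (k - 7)) _ (Y ord0 k)) ?subrr // => j.
rewrite !mxE.
have Htab : tab TT j k = (nat_of_ord j == (k - 7)%N).
  by rewrite -(tabT HT (ltn_ord j) Hk2); congr tab; lia.
rewrite Htab mulz_bool.
have E : (nat_of_ord j == (k - 7)%N) = (j == inord (k - 7)).
  apply/eqP/eqP => [E|E].
    by apply: val_inj => /=; rewrite inordK33 //; lia.
  by move/(congr1 val): E => /=; rewrite inordK33 //; lia.
rewrite E; case: ifP => // /eqP ->.
by congr (Y ord0 _); apply: val_inj => /=; rewrite !inordK40 ?inordK33 //; lia.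
Qed.

Lemma y2_low RT TT (Ho : chk_orth RT TT) (HR : chk_Rid RT) (HT : chk_Tid TT) x (k : 'I_40) :
  x \in Code RT TT -> (k < 7)%N -> y2 RT TT x ord0 k = 0.
Proof.
move=> Hx Hk; have /inCodeP /(_ k) := y2_Code Ho HR HT Hx.
rewrite /z4dot => H; rewrite -H; symmetry; apply: (@sum_delta _ k) => l.
rewrite [X in X * _]mxE /Gn Hk.
case: (ltnP l 7) => Hl.
  rewrite (tabR HR Hk Hl) mulrC mulz_bool.
  have -> : (nat_of_ord k == l) = (l == k) by rewrite eq_sym.
  by case: eqP => [->|].
rewrite (y2_high HR HT x Hl) mulr0; case: eqP => // E.
by move: Hl; rewrite E; lia.
Qed.

Lemma decomp RT TT (Ho : chk_orth RT TT) (HR : chk_Rid RT) (HT : chk_Tid TT) x :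
  x \in Code RT TT ->
  x = \sum_(i < 7) acoef x i *: genn RT TT i + \sum_(j < 33) ccoef RT TT x j *: ttn TT j.
Proof.
move=> Hx.
have H0 : y2 RT TT x = 0.
  apply/rowP => k; rewrite [in RHS]mxE.
  case: (ltnP k 7) => Hk; first exact: (y2_low Ho HR HT Hx).
  exact: y2_high.
move: H0; rewrite /y2 /ccoef /y1.
move: (\sum_(i < 7) acoef x i *: genn RT TT i) => A.
move: (\sum_(j < 33) _) => B.
move/eqP; rewrite subr_eq0 => /eqP <-.
by rewrite addrC subrK.
Qed.

Lemma dot_tt RT TT x (j : 'I_33) : x \in Code RT TT ->
  z4dot x (ttn TT j) + z4dot x (ttn TT j) = 0.
Proof.
move=> /inCodeP /(_ (inord (7 + j))) H.
rewrite -z4dotDr (tt2 RT) z4dotC -H; congr (z4dot (genn RT TT _) x).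
by rewrite inordK40 //; have := ltn_ord j; lia.
Qed.

Lemma self_orth RT TT (Ho : chk_orth RT TT) (HR : chk_Rid RT) (HT : chk_Tid TT) x y :
  x \in Code RT TT -> y \in Code RT TT -> z4dot x y = 0.
Proof.
move=> Hx Hy; rewrite {1}(decomp Ho HR HT Hy) z4dotDr !z4dot_sumr.
rewrite big1 ?add0r.
  rewrite big1 // => j _; rewrite z4dotZr; apply: t1; first exact: cc2.
  exact: (dot_tt j Hx).
move=> i _; rewrite z4dotZr z4dotC.
by move/inCodeP: Hx => /(_ (widen_ord (isT : (7 <= 40)%N) i)) /= ->; rewrite mulr0.
Qed.

Lemma Code_self_dual RT TT (Ho : chk_orth RT TT) (HR : chk_Rid RT) (HT : chk_Tid TT) :
  self_dual (Code RT TT).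
Proof.
split.
  rewrite /is_Z4code; split.
  - exact: (Code0 RT TT).
  - by move=> x y; apply: CodeD.
  - by move=> a x; apply: CodeZ.
apply/setP => x; apply/idP/idP => Hx.
  rewrite /z4dual inE; apply/forall_inP => y Hy; apply/eqP.
  exact: (self_orth Ho HR HT Hy Hx).
move: Hx; rewrite /z4dual inE => /forall_inP H.
apply/inCodeP => i; apply/eqP; exact: (H _ (Code_gen Ho i)).
Qed.

Definition Q (x : vec) : nat := (\sum_(k < 40) (val (x ord0 k)) ^ 2)%N.

Lemma ewc (a : 'Z_4) : ew_coord a = ((val a) ^ 2 %% 8)%N.
Proof. by move: a => [[|[|[|[|m]]]] Hm]. Qed.

Lemma ew_Q x : (euclid_wt x %% 8 = Q x %% 8)%N.
Proof. by rewrite /euclid_wt /Q; under eq_bigr do rewrite ewc; rewrite modn_sum. Qed.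

Lemma ptadd (a b : 'Z_4) :
  ((val (a + b)%R) ^ 2 %% 8 = ((val a) ^ 2 + (val b) ^ 2 + 2 * (val a * val b)) %% 8)%N.
Proof. by move: a b => [[|[|[|[|m]]]] Hm] [[|[|[|[|n]]]] Hn]. Qed.
Lemma ptmul (a b : 'Z_4) :
  ((val (a * b)%R) ^ 2 %% 8 = ((val a) ^ 2 * (val b) ^ 2) %% 8)%N.
Proof. by move: a b => [[|[|[|[|m]]]] Hm] [[|[|[|[|n]]]] Hn]. Qed.

Lemma Q_add x y : (Q (x + y) %% 8 = (Q x + Q y + 2 * val (z4dot x y)) %% 8)%N.
Proof.
rewrite /Q -modn_sum.
under eq_bigr do rewrite mxE ptadd.
rewrite modn_sum big_split [in LHS]big_split -big_distrr.
rewrite val_dot muln_modr // (_ : (2 * 4 = 8)%N) // modnDmr.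
done.
Qed.

Lemma Q_scale a x : (Q (a *: x) %% 8 = ((val a) ^ 2 * Q x) %% 8)%N.
Proof.
rewrite /Q -modn_sum.
under eq_bigr do rewrite mxE ptmul.
by rewrite modn_sum big_distrr.
Qed.

Lemma Q0 : Q 0 = 0%N.
Proof. by rewrite /Q big1 // => i _; rewrite mxE. Qed.

Definition chk_Q RT TT := all (fun i =>
  sumn [seq (Gn RT TT i k %% 4) ^ 2 | k <- iota 0 40] %% 8 == 0)%N (iota 0 40).
Definition chk_QT TT := all (fun j =>
  ~~ odd (sumn [seq (tab TT j k %% 4) ^ 2 | k <- iota 0 40]%N)) (iota 0 33).

Lemma Q_gen RT TT (HQ : chk_Q RT TT) i : (i < 40)%N -> (Q (genn RT TT i) %% 8 = 0)%N.
Proof.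
move=> Hi; rewrite /Q.
under eq_bigr do rewrite mxE vinZp.
rewrite (sum_iota 40 (fun k => (Gn RT TT i k %% 4) ^ 2)%N).
by move/allP: HQ => /(_ i); rewrite mem_iota Hi => /(_ isT) /eqP.
Qed.

Lemma Q_tt TT (HQT : chk_QT TT) (j : 'I_33) : ~~ odd (Q (ttn TT j)).
Proof.
rewrite /Q.
under eq_bigr do rewrite mxE vinZp.
rewrite (sum_iota 40 (fun k => (tab TT j k %% 4) ^ 2)%N).
by move/allP: HQT => /(_ j); rewrite mem_iota ltn_ord => /(_ isT).
Qed.

Lemma half_sq (c : 'Z_4) m : c + c = 0 -> ~~ odd m -> (((val c) ^ 2 * m) %% 8 = 0)%N.
Proof.
move: c => [[|[|[|[|k]]]] Hk] /eqP //= _ Hm.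
lia.
Qed.

Lemma typeII_Code RT TT (Ho : chk_orth RT TT) (HR : chk_Rid RT) (HT : chk_Tid TT)
  (HQ : chk_Q RT TT) (HQT : chk_QT TT) x :
  x \in Code RT TT -> (8 %| euclid_wt x)%N.
Proof.
move=> Hx; rewrite /dvdn ew_Q.
pose P v := (v \in Code RT TT) && (Q v %% 8 == 0)%N.
have PD : forall u v, P u -> P v -> P (u + v).
  move=> u v /andP [Hu /eqP Qu] /andP [Hv /eqP Qv]; apply/andP; split.
    exact: CodeD.
  rewrite Q_add (self_orth Ho HR HT Hu Hv) /= addn0 -modnDm Qu Qv.
  by [].
have P0 : P 0 by rewrite /P Code0 Q0.
have HP : P (\sum_(i < 7) acoef x i *: genn RT TT i +
             \sum_(j < 33) ccoef RT TT x j *: ttn TT j).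
  apply: (PD).
    apply: (big_ind P P0 PD) => i _; apply/andP; split.
      apply: CodeZ; exact: (Code_gen Ho (widen_ord (isT : (7 <= 40)%N) i)).
    rewrite Q_scale -modnMmr Q_gen ?muln0 //.
    by have := ltn_ord i; lia.
  apply: (big_ind P P0 PD) => j _; apply/andP; split.
    by apply: ttZ_Code => //; apply: cc2.
  rewrite Q_scale half_sq //; first exact: cc2.
  exact: Q_tt.
rewrite -(decomp Ho HR HT Hx) in HP.
by case/andP: HP.
Qed.

Definition oddpat RT (b : seq nat) k :=
  odd (sumn [seq nth 0%N b i * tab RT i k | i <- iota 0 7]%N).
Definition cnt RT b := count (oddpat RT b) (iota 0 40).
Definition chk_res RT := allbits 7 (fun b => (b == nseq 7 0%N) || (16 <= cnt RT b)%N).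
Definition chk_cols RT := all (fun k => all (fun l => (k == l) ||
  has (fun i => odd (tab RT i k + tab RT i l)) (iota 0 7)) (iota 0 40)) (iota 0 40).
Definition bvec (x : vec) : seq nat := mkseq (fun i => val (x ord0 (inord i)) %% 2)%N 7.

Lemma odd_eq a b : (a %% 2 = b %% 2)%N -> odd a = odd b.
Proof. by rewrite !modn2; case: (odd a); case: (odd b). Qed.

Lemma cc_even (c : 'Z_4) : c + c = 0 -> (val c %% 2 = 0)%N.
Proof. by move: c => [[|[|[|[|k]]]] Hk] /eqP. Qed.

Lemma coordZ4 RT TT (Ho : chk_orth RT TT) (HR : chk_Rid RT) (HT : chk_Tid TT) x (k : 'I_40) :
  x \in Code RT TT -> odd (val (x ord0 k)) = oddpat RT (bvec x) k.
Proof.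
move=> Hx; rewrite {1}(decomp Ho HR HT Hx) mxE !summxE vD !vsum.
apply: odd_eq.
rewrite !modn_dvdm // -modnDm !modn_dvdm // modnDm.
have H2 : ((\sum_(i < 33) val ((ccoef RT TT x i *: ttn TT i) ord0 k)) %% 2 = 0)%N.
  rewrite -modn_sum big1 // => j _; rewrite !mxE vM modn_dvdm // -modnMml.
  by rewrite cc_even ?mul0n //; apply: cc2.
rewrite -modnDmr H2 addn0 /oddpat.
rewrite -(sum_iota 7 (fun i => nth 0%N (bvec x) i * tab RT i k)%N) -modn_sum.
rewrite -[RHS]modn_sum.
congr (_ %% 2)%N; apply: eq_bigr => i _.
rewrite !mxE vM vinZp /Gn (ltn_ord i) modn_dvdm // -modnMml -modnMmr modn_dvdm //.
rewrite /bvec nth_mkseq // modnMmr.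
by [].
Qed.

Lemma ew_odd (a : 'Z_4) : (odd (val a) <= ew_coord a)%N.
Proof. by move: a => [[|[|[|[|m]]]] Hm]. Qed.
Lemma ew_even (a : 'Z_4) : ~~ odd (val a) -> ew_coord a = (4 * (a != 0%R))%N.
Proof. by move: a => [[|[|[|[|m]]]] Hm]. Qed.
Lemma val_even (a : 'Z_4) : ~~ odd (val a) -> val a = if a != 0 then 2%N else 0%N.
Proof. by move: a => [[|[|[|[|m]]]] Hm]. Qed.

Lemma card_set_sum n (P : pred 'I_n) : #|[set k | P k]| = (\sum_(k < n) P k)%N.
Proof.
rewrite -sum1_card big_mkcond /=; apply: eq_bigr => k _.
by rewrite inE; case: (P k).
Qed.

Lemma ew_cnt RT TT (Ho : chk_orth RT TT) (HR : chk_Rid RT) (HT : chk_Tid TT) x :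
  x \in Code RT TT -> (cnt RT (bvec x) <= euclid_wt x)%N.
Proof.
move=> Hx; rewrite /cnt -sumn_count.
rewrite -(sum_iota 40 (fun k => nat_of_bool (oddpat RT (bvec x) k))).
apply: leq_sum => k _; rewrite -(coordZ4 Ho HR HT k Hx).
exact: ew_odd.
Qed.

Lemma bvec_ok x : size (bvec x) = 7%N /\ all (fun v => v <= 1)%N (bvec x).
Proof.
split; first by rewrite size_mkseq.
apply/allP => v /mapP [i _ ->].
by have := ltn_pmod (val (x ord0 (inord i))) (isT : (0 < 2)%N); lia.
Qed.

Lemma ar1 a b : odd (a + b) -> ((a %% 4 * 2 + b %% 4 * 2) %% 4)%N <> 0%N.
Proof. lia. Qed.
Lemma ar2 m : (8 %| 4 * m)%N -> m <> 0%N -> m <> 2%N -> (16 <= 4 * m)%N.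
Proof. lia. Qed.

Lemma minwt RT TT (Ho : chk_orth RT TT) (HR : chk_Rid RT) (HT : chk_Tid TT)
  (HQ : chk_Q RT TT) (HQT : chk_QT TT) (Hres : chk_res RT) (Hcols : chk_cols RT) x :
  x \in Code RT TT -> x != 0 -> (16 <= euclid_wt x)%N.
Proof.
move=> Hx Hx0.
have [Hs Ha] := bvec_ok x.
have := allbitsP Hres Hs Ha.
case: eqP => [Hb|_] /= H; last exact: leq_trans H (ew_cnt Ho HR HT Hx).
have Hev : forall k, ~~ odd (val (x ord0 k)).
  move=> k; rewrite (coordZ4 Ho HR HT k Hx) Hb /oddpat.
  rewrite (eq_map (g := fun _ => 0%N)) //.
  by move=> i; rewrite nth_nseq if_same.
set A := [set k | x ord0 k != 0].
have Hew : euclid_wt x = (4 * #|A|)%N.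
  rewrite /euclid_wt card_set_sum big_distrr /=.
  by apply: eq_bigr => k _; rewrite ew_even.
have Hty := typeII_Code Ho HR HT HQ HQT Hx.
rewrite Hew in Hty *.
have HA0 : #|A| <> 0%N.
  move/eqP; rewrite cards_eq0 => /eqP A0.
  move/negP: Hx0; apply; apply/eqP/rowP => k; rewrite [RHS]mxE.
  have : k \notin A by rewrite A0 inE.
  by rewrite inE negbK => /eqP.
have HA2 : #|A| <> 2%N.
  move/eqP/cards2P => [k1 [k2 [Hne HA]]].
  move/allP: Hcols => /(_ k1); rewrite mem_iota ltn_ord => /(_ isT) /allP /(_ k2).
  rewrite mem_iota ltn_ord => /(_ isT); rewrite (negPf (Hne : ~~ (nat_of_ord k1 == k2))) orFb => /hasP [i].
  rewrite mem_iota add0n => /andP [_ Hi] Hodd.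
  move/inCodeP: Hx => /(_ (inord i)) /(congr1 val); rewrite val_dot /=.
  under eq_bigr => k _ do rewrite mxE vinZp (val_even (Hev k)).
  have E (k : 'I_40) : (Gn RT TT (inord i : 'I_40) k %% 4 * (if x ord0 k != 0%R then 2 else 0))%N =
     (if k \in A then (Gn RT TT (inord i : 'I_40) k %% 4) * 2 else 0)%N.
    by rewrite /A inE; case: ifP => _; rewrite ?muln0.
  under eq_bigr => k _ do rewrite E.
  rewrite -big_mkcond HA big_setU1 /=; last by rewrite inE.
  rewrite big_set1 /Gn inordK40; last exact: (ltn_trans Hi).
  rewrite Hi /=.
  exact: ar1.
exact: ar2.
Qed.

Definition wvec (W : seq nat) : vec := \row_(k < 40) (inZp (nth 0%N W k) : 'Z_4).
Definition chk_mem RT TT W := all (fun i =>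
  (sumn [seq (Gn RT TT i k %% 4) * (nth 0 W k %% 4) | k <- iota 0 40] %% 4 == 0)%N)
  (iota 0 40).

Lemma wvec_mem RT TT W (H : chk_mem RT TT W) : wvec W \in Code RT TT.
Proof.
apply/inCodeP => i; apply: val_inj; rewrite val_dot /=.
under eq_bigr do rewrite !mxE !vinZp.
rewrite (sum_iota 40 (fun k => (Gn RT TT i k %% 4) * (nth 0 W k %% 4))%N).
by move/allP: H => /(_ i); rewrite mem_iota ltn_ord => /(_ isT) /eqP.
Qed.

Lemma ew_wvec W :
  euclid_wt (wvec W) = sumn [seq ew_coord (inZp (nth 0%N W k) : 'Z_4) | k <- iota 0 40].
Proof.
rewrite /euclid_wt; under eq_bigr do rewrite mxE.
exact: (sum_iota 40 (fun k => ew_coord (inZp (nth 0%N W k) : 'Z_4))).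
Qed.

Lemma extremal_Code RT TT (Ho : chk_orth RT TT) (HR : chk_Rid RT) (HT : chk_Tid TT)
  (HQ : chk_Q RT TT) (HQT : chk_QT TT) (Hres : chk_res RT) (Hcols : chk_cols RT) W
  (HW : chk_mem RT TT W)
  (HWe : sumn [seq ew_coord (inZp (nth 0%N W k) : 'Z_4) | k <- iota 0 40] = 16%N) :
  extremal_typeII (Code RT TT).
Proof.
split.
  split; first exact: Code_self_dual.
  by move=> x Hx; apply: (typeII_Code Ho HR HT HQ HQT Hx).
rewrite (_ : (8 * (40 %/ 24) + 8 = 16)%N) //.
split.
  exists (wvec W); first exact: wvec_mem.
  split; last by rewrite ew_wvec.
  apply/eqP => W0; move: HWe; rewrite -ew_wvec W0 /euclid_wt big1 // => i _.
  by rewrite mxE.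
by move=> x Hx Hx0; apply: (minwt Ho HR HT HQ HQT Hres Hcols Hx Hx0).
Qed.

Definition rrow RT (i : nat) : 'rV['F_2]_40 := \row_(k < 40) ((tab RT i k %% 2)%:R : 'F_2).

Lemma pr2 : prime 2. Proof. by []. Qed.

Lemma F2_eq (m n : nat) : (m %% 2 = n %% 2)%N -> (m%:R : 'F_2) = n%:R.
Proof. by move=> H; rewrite -(Fp_nat_mod pr2 m) H Fp_nat_mod. Qed.

Lemma red_decomp RT TT (Ho : chk_orth RT TT) (HR : chk_Rid RT) (HT : chk_Tid TT) x :
  x \in Code RT TT ->
  map_mx red2 x = \sum_(i < 7) ((val (acoef x i) %% 2)%N%:R : 'F_2) *: rrow RT i.
Proof.
move=> Hx; apply/rowP => k; rewrite !mxE summxE.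
under [RHS]eq_bigr => i _ do rewrite !mxE -natrM.
rewrite -natr_sum /red2; apply: F2_eq.
have Hk : (val (x ord0 k) %% 2 =
    (sumn [seq nth 0%N (bvec x) i * tab RT i k | i <- iota 0 7]) %% 2)%N.
  by rewrite !modn2 (coordZ4 Ho HR HT k Hx).
rewrite -[x 0 k]/(x ord0 k) modn_mod Hk.
rewrite -(sum_iota 7 (fun i => nth 0%N (bvec x) i * tab RT i k)%N) -modn_sum.
rewrite -[RHS]modn_sum; congr (_ %% 2)%N; apply: eq_bigr => i _.
rewrite /bvec nth_mkseq // -modnMmr modnMml modnMmr.
by [].
Qed.

Lemma rrow_res RT TT (Ho : chk_orth RT TT) (i : 'I_7) :
  rrow RT i \in residue (Code RT TT).
Proof.
apply/imsetP; exists (genn RT TT i).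
  exact: (Code_gen Ho (widen_ord (isT : (7 <= 40)%N) i)).
apply/rowP => k; rewrite !mxE /red2 vinZp /Gn (ltn_ord i) modn_dvdm //.
Qed.

Definition rX RT : 7.-tuple 'rV['F_2]_40 := [tuple rrow RT i | i < 7].

Lemma rX_free RT (HR : chk_Rid RT) : free (rX RT).
Proof.
apply/freeP => c Hc i.
have /rowP /(_ (widen_ord (isT : (7 <= 40)%N) i)) := Hc.
rewrite !mxE summxE => H; rewrite -{}[RHS]H; symmetry.
rewrite (bigD1 i) //= big1 ?addr0.
  rewrite nth_mktuple !mxE (tabR HR (ltn_ord i) (ltn_ord i)) eqxx /=.
  by rewrite mulr1.
move=> j Hj; rewrite nth_mktuple !mxE (tabR HR (ltn_ord j) (ltn_ord i)).
rewrite (_ : (nat_of_ord j == nat_of_ord i) = false) ?mulr0 //.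
exact: negPf Hj.
Qed.

Lemma residue_dim_Code RT TT (Ho : chk_orth RT TT) (HR : chk_Rid RT) (HT : chk_Tid TT) :
  residue_dim (Code RT TT) = 7%N.
Proof.
rewrite /residue_dim.
have -> : <<enum (residue (Code RT TT))>>%VS = <<rX RT>>%VS.
  apply/eqP; rewrite eqEsubv; apply/andP; split; apply/span_subvP => v.
    rewrite mem_enum => /imsetP [c Hc ->].
    rewrite (red_decomp Ho HR HT Hc); apply: rpred_sum => i _; apply: rpredZ.
    apply: memv_span; rewrite -(nth_mktuple (fun i : 'I_7 => rrow RT i) 0 i).
    by rewrite mem_nth // size_tuple.
  move=> /mapP [i _ ->]; apply: memv_span; rewrite mem_enum.
  exact: rrow_res.
by move/eqnP: (rX_free HR); rewrite size_tuple.
Qed.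

Definition oc (x : vec) := #|[set k | odd (val (x ord0 k))]|.
Definition oc2 (x y : vec) := #|[set k | odd (val (x ord0 k)) && odd (val (y ord0 k))]|.
Definition hasP6 (C : {set vec}) :=
  exists x y, [/\ x \in C, y \in C, oc x = 16%N, oc y = 16%N & oc2 x y = 6%N].

Definition chk_noP RT := allbits 7 (fun b => allbits 7 (fun b' =>
  ~~ [&& cnt RT b == 16, cnt RT b' == 16 &
        count (fun k => oddpat RT b k && oddpat RT b' k) (iota 0 40) == 6]))%N.

Lemma oc_cnt RT TT (Ho : chk_orth RT TT) (HR : chk_Rid RT) (HT : chk_Tid TT) x :
  x \in Code RT TT -> oc x = cnt RT (bvec x).
Proof.
move=> Hx; rewrite /oc (card_set_sum (fun k : 'I_40 => odd (val (x ord0 k)))) /cnt -sumn_count.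
rewrite -(sum_iota 40 (fun k => nat_of_bool (oddpat RT (bvec x) k))).
by apply: eq_bigr => k _; rewrite (coordZ4 Ho HR HT k Hx).
Qed.

Lemma oc2_cnt RT TT (Ho : chk_orth RT TT) (HR : chk_Rid RT) (HT : chk_Tid TT) x y :
  x \in Code RT TT -> y \in Code RT TT ->
  oc2 x y = count (fun k => oddpat RT (bvec x) k && oddpat RT (bvec y) k) (iota 0 40).
Proof.
move=> Hx Hy; rewrite /oc2 (card_set_sum (fun k : 'I_40 => odd (val (x ord0 k)) && odd (val (y ord0 k)))) -sumn_count.
rewrite -(sum_iota 40 (fun k => nat_of_bool (oddpat RT (bvec x) k && oddpat RT (bvec y) k))).
by apply: eq_bigr => k _; rewrite (coordZ4 Ho HR HT k Hx) (coordZ4 Ho HR HT k Hy).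
Qed.

Lemma noP6 RT TT (Ho : chk_orth RT TT) (HR : chk_Rid RT) (HT : chk_Tid TT)
  (Hn : chk_noP RT) : ~ hasP6 (Code RT TT).
Proof.
move=> [x [y [Hx Hy Ox Oy Oxy]]].
have [Hsx Hax] := bvec_ok x; have [Hsy Hay] := bvec_ok y.
have := allbitsP (allbitsP Hn Hsx Hax) Hsy Hay.
rewrite -(oc_cnt Ho HR HT Hx) -(oc_cnt Ho HR HT Hy) -(oc2_cnt Ho HR HT Hx Hy).
by rewrite Ox Oy Oxy.
Qed.

Lemma t2 (a : 'Z_4) (e : bool) : odd (val ((-1) ^+ e * a)) = odd (val a).
Proof. by move: a e => [[|[|[|[|m]]]] Hm] []. Qed.

Lemma card_perm (s : 'S_40) (P : pred 'I_40) : #|[set k | P (s k)]| = #|[set k | P k]|.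
Proof.
rewrite -[RHS](card_preimset _ (@perm_inj _ s)).
by apply: eq_card => k; rewrite !inE.
Qed.

Lemma P6_transport (C1 C2 : {set vec}) : z4equiv C1 C2 -> hasP6 C2 -> hasP6 C1.
Proof.
move=> [s [e HC]] [x [y [Hx Hy Ox Oy Oxy]]].
rewrite HC in Hx Hy.
case/imsetP: Hx => c Hc Ex; case/imsetP: Hy => d Hd Ey.
have Hodd : forall (z : vec) k, odd (val ((\row_i ((-1) ^+ e i * z ord0 (s i))) ord0 k : 'Z_4))
    = odd (val (z ord0 (s k))).
  by move=> z k; rewrite mxE t2.
have Hoc : forall z : vec, oc (\row_i ((-1) ^+ e i * z ord0 (s i))) = oc z.
  move=> z; rewrite /oc -(card_perm s (fun k => odd (val (z ord0 k)))).
  by apply: eq_card => k; rewrite !inE Hodd.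
exists c, d; split => //.
- by rewrite -Ox Ex Hoc.
- by rewrite -Oy Ey Hoc.
rewrite -Oxy Ex Ey /oc2.
rewrite -(card_perm s (fun k => odd (val (c ord0 k)) && odd (val (d ord0 k)))).
by apply: eq_card => k; rewrite !inE !Hodd.
Qed.

Open Scope nat_scope.

Definition R_c1 : seq (seq nat) :=
  [:: [:: 1; 0; 0; 0; 0; 0; 0; 1; 1; 1; 1; 1; 1; 1; 1; 2; 0; 1; 0; 0; 0; 1; 1; 1; 0; 0; 1; 0; 0; 0; 1; 0; 0; 0; 1; 1; 0; 1; 1; 1];
  [:: 0; 1; 0; 0; 0; 0; 0; 3; 0; 1; 0; 1; 1; 0; 0; 1; 0; 0; 1; 0; 1; 1; 0; 0; 1; 0; 0; 1; 0; 1; 0; 1; 0; 0; 1; 0; 0; 1; 0; 1];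
  [:: 0; 0; 1; 0; 0; 0; 0; 0; 1; 0; 1; 1; 0; 1; 0; 0; 1; 0; 0; 1; 1; 0; 1; 0; 0; 1; 0; 0; 1; 1; 0; 0; 1; 0; 0; 1; 0; 0; 1; 1];
  [:: 0; 0; 0; 1; 0; 0; 0; 3; 1; 0; 0; 1; 0; 0; 1; 1; 1; 0; 0; 0; 1; 0; 0; 1; 1; 1; 0; 0; 0; 1; 0; 0; 0; 1; 1; 1; 0; 0; 0; 1];
  [:: 0; 0; 0; 0; 1; 0; 0; 0; 0; 1; 1; 1; 0; 0; 0; 0; 0; 1; 1; 1; 1; 0; 0; 0; 0; 0; 1; 1; 1; 1; 0; 0; 0; 0; 0; 0; 1; 1; 1; 1];
  [:: 0; 0; 0; 0; 0; 1; 0; 0; 0; 0; 0; 0; 3; 1; 1; 1; 1; 1; 1; 1; 1; 2; 0; 0; 0; 0; 0; 0; 0; 0; 1; 1; 1; 1; 1; 1; 1; 1; 1; 1];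
  [:: 0; 0; 0; 0; 0; 0; 1; 0; 2; 2; 0; 2; 0; 0; 0; 0; 0; 0; 0; 0; 0; 1; 1; 1; 1; 1; 1; 1; 1; 1; 1; 1; 1; 1; 1; 1; 1; 1; 1; 1]].

Definition T_c1 : seq (seq nat) :=
  [:: [:: 1; 1; 0; 1; 0; 0; 0; 1; 0; 0; 0; 0; 0; 0; 0; 0; 0; 0; 0; 0; 0; 0; 0; 0; 0; 0; 0; 0; 0; 0; 0; 0; 0; 0; 0; 0; 0; 0; 0; 0];
  [:: 1; 0; 1; 1; 0; 0; 0; 0; 1; 0; 0; 0; 0; 0; 0; 0; 0; 0; 0; 0; 0; 0; 0; 0; 0; 0; 0; 0; 0; 0; 0; 0; 0; 0; 0; 0; 0; 0; 0; 0];
  [:: 1; 1; 0; 0; 1; 0; 0; 0; 0; 1; 0; 0; 0; 0; 0; 0; 0; 0; 0; 0; 0; 0; 0; 0; 0; 0; 0; 0; 0; 0; 0; 0; 0; 0; 0; 0; 0; 0; 0; 0];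
  [:: 1; 0; 1; 0; 1; 0; 0; 0; 0; 0; 1; 0; 0; 0; 0; 0; 0; 0; 0; 0; 0; 0; 0; 0; 0; 0; 0; 0; 0; 0; 0; 0; 0; 0; 0; 0; 0; 0; 0; 0];
  [:: 1; 1; 1; 1; 1; 0; 0; 0; 0; 0; 0; 1; 0; 0; 0; 0; 0; 0; 0; 0; 0; 0; 0; 0; 0; 0; 0; 0; 0; 0; 0; 0; 0; 0; 0; 0; 0; 0; 0; 0];
  [:: 1; 1; 0; 0; 0; 1; 0; 0; 0; 0; 0; 0; 1; 0; 0; 0; 0; 0; 0; 0; 0; 0; 0; 0; 0; 0; 0; 0; 0; 0; 0; 0; 0; 0; 0; 0; 0; 0; 0; 0];
  [:: 1; 0; 1; 0; 0; 1; 0; 0; 0; 0; 0; 0; 0; 1; 0; 0; 0; 0; 0; 0; 0; 0; 0; 0; 0; 0; 0; 0; 0; 0; 0; 0; 0; 0; 0; 0; 0; 0; 0; 0];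
  [:: 1; 0; 0; 1; 0; 1; 0; 0; 0; 0; 0; 0; 0; 0; 1; 0; 0; 0; 0; 0; 0; 0; 0; 0; 0; 0; 0; 0; 0; 0; 0; 0; 0; 0; 0; 0; 0; 0; 0; 0];
  [:: 0; 1; 0; 1; 0; 1; 0; 0; 0; 0; 0; 0; 0; 0; 0; 1; 0; 0; 0; 0; 0; 0; 0; 0; 0; 0; 0; 0; 0; 0; 0; 0; 0; 0; 0; 0; 0; 0; 0; 0];
  [:: 0; 0; 1; 1; 0; 1; 0; 0; 0; 0; 0; 0; 0; 0; 0; 0; 1; 0; 0; 0; 0; 0; 0; 0; 0; 0; 0; 0; 0; 0; 0; 0; 0; 0; 0; 0; 0; 0; 0; 0];
  [:: 1; 0; 0; 0; 1; 1; 0; 0; 0; 0; 0; 0; 0; 0; 0; 0; 0; 1; 0; 0; 0; 0; 0; 0; 0; 0; 0; 0; 0; 0; 0; 0; 0; 0; 0; 0; 0; 0; 0; 0];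
  [:: 0; 1; 0; 0; 1; 1; 0; 0; 0; 0; 0; 0; 0; 0; 0; 0; 0; 0; 1; 0; 0; 0; 0; 0; 0; 0; 0; 0; 0; 0; 0; 0; 0; 0; 0; 0; 0; 0; 0; 0];
  [:: 0; 0; 1; 0; 1; 1; 0; 0; 0; 0; 0; 0; 0; 0; 0; 0; 0; 0; 0; 1; 0; 0; 0; 0; 0; 0; 0; 0; 0; 0; 0; 0; 0; 0; 0; 0; 0; 0; 0; 0];
  [:: 0; 1; 1; 1; 1; 1; 0; 0; 0; 0; 0; 0; 0; 0; 0; 0; 0; 0; 0; 0; 1; 0; 0; 0; 0; 0; 0; 0; 0; 0; 0; 0; 0; 0; 0; 0; 0; 0; 0; 0];
  [:: 1; 1; 0; 0; 0; 0; 1; 0; 0; 0; 0; 0; 0; 0; 0; 0; 0; 0; 0; 0; 0; 1; 0; 0; 0; 0; 0; 0; 0; 0; 0; 0; 0; 0; 0; 0; 0; 0; 0; 0];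
  [:: 1; 0; 1; 0; 0; 0; 1; 0; 0; 0; 0; 0; 0; 0; 0; 0; 0; 0; 0; 0; 0; 0; 1; 0; 0; 0; 0; 0; 0; 0; 0; 0; 0; 0; 0; 0; 0; 0; 0; 0];
  [:: 1; 0; 0; 1; 0; 0; 1; 0; 0; 0; 0; 0; 0; 0; 0; 0; 0; 0; 0; 0; 0; 0; 0; 1; 0; 0; 0; 0; 0; 0; 0; 0; 0; 0; 0; 0; 0; 0; 0; 0];
  [:: 0; 1; 0; 1; 0; 0; 1; 0; 0; 0; 0; 0; 0; 0; 0; 0; 0; 0; 0; 0; 0; 0; 0; 0; 1; 0; 0; 0; 0; 0; 0; 0; 0; 0; 0; 0; 0; 0; 0; 0];
  [:: 0; 0; 1; 1; 0; 0; 1; 0; 0; 0; 0; 0; 0; 0; 0; 0; 0; 0; 0; 0; 0; 0; 0; 0; 0; 1; 0; 0; 0; 0; 0; 0; 0; 0; 0; 0; 0; 0; 0; 0];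
  [:: 1; 0; 0; 0; 1; 0; 1; 0; 0; 0; 0; 0; 0; 0; 0; 0; 0; 0; 0; 0; 0; 0; 0; 0; 0; 0; 1; 0; 0; 0; 0; 0; 0; 0; 0; 0; 0; 0; 0; 0];
  [:: 0; 1; 0; 0; 1; 0; 1; 0; 0; 0; 0; 0; 0; 0; 0; 0; 0; 0; 0; 0; 0; 0; 0; 0; 0; 0; 0; 1; 0; 0; 0; 0; 0; 0; 0; 0; 0; 0; 0; 0];
  [:: 0; 0; 1; 0; 1; 0; 1; 0; 0; 0; 0; 0; 0; 0; 0; 0; 0; 0; 0; 0; 0; 0; 0; 0; 0; 0; 0; 0; 1; 0; 0; 0; 0; 0; 0; 0; 0; 0; 0; 0];
  [:: 0; 1; 1; 1; 1; 0; 1; 0; 0; 0; 0; 0; 0; 0; 0; 0; 0; 0; 0; 0; 0; 0; 0; 0; 0; 0; 0; 0; 0; 1; 0; 0; 0; 0; 0; 0; 0; 0; 0; 0];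
  [:: 1; 0; 0; 0; 0; 1; 1; 0; 0; 0; 0; 0; 0; 0; 0; 0; 0; 0; 0; 0; 0; 0; 0; 0; 0; 0; 0; 0; 0; 0; 1; 0; 0; 0; 0; 0; 0; 0; 0; 0];
  [:: 0; 1; 0; 0; 0; 1; 1; 0; 0; 0; 0; 0; 0; 0; 0; 0; 0; 0; 0; 0; 0; 0; 0; 0; 0; 0; 0; 0; 0; 0; 0; 1; 0; 0; 0; 0; 0; 0; 0; 0];
  [:: 0; 0; 1; 0; 0; 1; 1; 0; 0; 0; 0; 0; 0; 0; 0; 0; 0; 0; 0; 0; 0; 0; 0; 0; 0; 0; 0; 0; 0; 0; 0; 0; 1; 0; 0; 0; 0; 0; 0; 0];
  [:: 0; 0; 0; 1; 0; 1; 1; 0; 0; 0; 0; 0; 0; 0; 0; 0; 0; 0; 0; 0; 0; 0; 0; 0; 0; 0; 0; 0; 0; 0; 0; 0; 0; 1; 0; 0; 0; 0; 0; 0];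
  [:: 1; 1; 0; 1; 0; 1; 1; 0; 0; 0; 0; 0; 0; 0; 0; 0; 0; 0; 0; 0; 0; 0; 0; 0; 0; 0; 0; 0; 0; 0; 0; 0; 0; 0; 1; 0; 0; 0; 0; 0];
  [:: 1; 0; 1; 1; 0; 1; 1; 0; 0; 0; 0; 0; 0; 0; 0; 0; 0; 0; 0; 0; 0; 0; 0; 0; 0; 0; 0; 0; 0; 0; 0; 0; 0; 0; 0; 1; 0; 0; 0; 0];
  [:: 0; 0; 0; 0; 1; 1; 1; 0; 0; 0; 0; 0; 0; 0; 0; 0; 0; 0; 0; 0; 0; 0; 0; 0; 0; 0; 0; 0; 0; 0; 0; 0; 0; 0; 0; 0; 1; 0; 0; 0];
  [:: 1; 1; 0; 0; 1; 1; 1; 0; 0; 0; 0; 0; 0; 0; 0; 0; 0; 0; 0; 0; 0; 0; 0; 0; 0; 0; 0; 0; 0; 0; 0; 0; 0; 0; 0; 0; 0; 1; 0; 0];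
  [:: 1; 0; 1; 0; 1; 1; 1; 0; 0; 0; 0; 0; 0; 0; 0; 0; 0; 0; 0; 0; 0; 0; 0; 0; 0; 0; 0; 0; 0; 0; 0; 0; 0; 0; 0; 0; 0; 0; 1; 0];
  [:: 1; 1; 1; 1; 1; 1; 1; 0; 0; 0; 0; 0; 0; 0; 0; 0; 0; 0; 0; 0; 0; 0; 0; 0; 0; 0; 0; 0; 0; 0; 0; 0; 0; 0; 0; 0; 0; 0; 0; 1]].

Definition W_c1 : seq nat := [:: 0; 0; 0; 0; 1; 0; 0; 0; 0; 1; 1; 1; 0; 0; 0; 0; 0; 1; 1; 1; 1; 0; 0; 0; 0; 0; 1; 1; 1; 1; 0; 0; 0; 0; 0; 0; 1; 1; 1; 1].

Definition R_c2 : seq (seq nat) :=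
  [:: [:: 1; 0; 0; 0; 0; 0; 0; 1; 1; 1; 2; 0; 1; 1; 1; 1; 0; 0; 0; 1; 1; 0; 1; 1; 1; 0; 1; 1; 0; 1; 1; 0; 0; 1; 0; 0; 1; 1; 0; 0];
  [:: 0; 1; 0; 0; 0; 0; 0; 3; 2; 0; 1; 1; 1; 1; 0; 0; 1; 1; 0; 1; 1; 0; 1; 0; 0; 1; 0; 0; 1; 1; 0; 1; 0; 1; 0; 0; 1; 1; 1; 1];
  [:: 0; 0; 1; 0; 0; 0; 0; 1; 1; 0; 0; 1; 1; 0; 1; 0; 0; 1; 0; 0; 1; 1; 0; 1; 0; 0; 0; 1; 1; 0; 0; 0; 1; 0; 0; 1; 1; 0; 0; 1];
  [:: 0; 0; 0; 1; 0; 0; 0; 3; 2; 1; 1; 0; 1; 0; 0; 1; 1; 1; 1; 1; 0; 1; 0; 0; 1; 1; 0; 1; 1; 1; 0; 0; 0; 1; 0; 1; 1; 0; 1; 0];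
  [:: 0; 0; 0; 0; 1; 0; 0; 1; 3; 1; 1; 1; 2; 0; 0; 0; 0; 3; 1; 1; 1; 0; 0; 0; 0; 0; 1; 1; 1; 1; 0; 0; 0; 0; 1; 1; 1; 1; 1; 1];
  [:: 0; 0; 0; 0; 0; 1; 0; 0; 0; 2; 0; 0; 1; 1; 1; 1; 1; 1; 1; 1; 1; 0; 0; 0; 0; 0; 0; 0; 0; 0; 1; 1; 1; 1; 1; 1; 1; 1; 1; 1];
  [:: 0; 0; 0; 0; 0; 0; 1; 2; 0; 0; 2; 0; 0; 0; 0; 0; 0; 2; 0; 0; 0; 1; 1; 1; 1; 1; 1; 1; 1; 1; 1; 1; 1; 1; 1; 1; 1; 1; 1; 1]].

Definition T_c2 : seq (seq nat) :=
  [:: [:: 1; 1; 1; 1; 1; 0; 0; 1; 0; 0; 0; 0; 0; 0; 0; 0; 0; 0; 0; 0; 0; 0; 0; 0; 0; 0; 0; 0; 0; 0; 0; 0; 0; 0; 0; 0; 0; 0; 0; 0];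
  [:: 1; 0; 1; 0; 1; 0; 0; 0; 1; 0; 0; 0; 0; 0; 0; 0; 0; 0; 0; 0; 0; 0; 0; 0; 0; 0; 0; 0; 0; 0; 0; 0; 0; 0; 0; 0; 0; 0; 0; 0];
  [:: 1; 0; 0; 1; 1; 0; 0; 0; 0; 1; 0; 0; 0; 0; 0; 0; 0; 0; 0; 0; 0; 0; 0; 0; 0; 0; 0; 0; 0; 0; 0; 0; 0; 0; 0; 0; 0; 0; 0; 0];
  [:: 0; 1; 0; 1; 1; 0; 0; 0; 0; 0; 1; 0; 0; 0; 0; 0; 0; 0; 0; 0; 0; 0; 0; 0; 0; 0; 0; 0; 0; 0; 0; 0; 0; 0; 0; 0; 0; 0; 0; 0];
  [:: 0; 1; 1; 0; 1; 0; 0; 0; 0; 0; 0; 1; 0; 0; 0; 0; 0; 0; 0; 0; 0; 0; 0; 0; 0; 0; 0; 0; 0; 0; 0; 0; 0; 0; 0; 0; 0; 0; 0; 0];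
  [:: 1; 1; 1; 1; 0; 1; 0; 0; 0; 0; 0; 0; 1; 0; 0; 0; 0; 0; 0; 0; 0; 0; 0; 0; 0; 0; 0; 0; 0; 0; 0; 0; 0; 0; 0; 0; 0; 0; 0; 0];
  [:: 1; 1; 0; 0; 0; 1; 0; 0; 0; 0; 0; 0; 0; 1; 0; 0; 0; 0; 0; 0; 0; 0; 0; 0; 0; 0; 0; 0; 0; 0; 0; 0; 0; 0; 0; 0; 0; 0; 0; 0];
  [:: 1; 0; 1; 0; 0; 1; 0; 0; 0; 0; 0; 0; 0; 0; 1; 0; 0; 0; 0; 0; 0; 0; 0; 0; 0; 0; 0; 0; 0; 0; 0; 0; 0; 0; 0; 0; 0; 0; 0; 0];
  [:: 1; 0; 0; 1; 0; 1; 0; 0; 0; 0; 0; 0; 0; 0; 0; 1; 0; 0; 0; 0; 0; 0; 0; 0; 0; 0; 0; 0; 0; 0; 0; 0; 0; 0; 0; 0; 0; 0; 0; 0];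
  [:: 0; 1; 0; 1; 0; 1; 0; 0; 0; 0; 0; 0; 0; 0; 0; 0; 1; 0; 0; 0; 0; 0; 0; 0; 0; 0; 0; 0; 0; 0; 0; 0; 0; 0; 0; 0; 0; 0; 0; 0];
  [:: 0; 1; 1; 1; 1; 1; 0; 0; 0; 0; 0; 0; 0; 0; 0; 0; 0; 1; 0; 0; 0; 0; 0; 0; 0; 0; 0; 0; 0; 0; 0; 0; 0; 0; 0; 0; 0; 0; 0; 0];
  [:: 0; 0; 0; 1; 1; 1; 0; 0; 0; 0; 0; 0; 0; 0; 0; 0; 0; 0; 1; 0; 0; 0; 0; 0; 0; 0; 0; 0; 0; 0; 0; 0; 0; 0; 0; 0; 0; 0; 0; 0];
  [:: 1; 1; 0; 1; 1; 1; 0; 0; 0; 0; 0; 0; 0; 0; 0; 0; 0; 0; 0; 1; 0; 0; 0; 0; 0; 0; 0; 0; 0; 0; 0; 0; 0; 0; 0; 0; 0; 0; 0; 0];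
  [:: 1; 1; 1; 0; 1; 1; 0; 0; 0; 0; 0; 0; 0; 0; 0; 0; 0; 0; 0; 0; 1; 0; 0; 0; 0; 0; 0; 0; 0; 0; 0; 0; 0; 0; 0; 0; 0; 0; 0; 0];
  [:: 0; 0; 1; 1; 0; 0; 1; 0; 0; 0; 0; 0; 0; 0; 0; 0; 0; 0; 0; 0; 0; 1; 0; 0; 0; 0; 0; 0; 0; 0; 0; 0; 0; 0; 0; 0; 0; 0; 0; 0];
  [:: 1; 1; 0; 0; 0; 0; 1; 0; 0; 0; 0; 0; 0; 0; 0; 0; 0; 0; 0; 0; 0; 0; 1; 0; 0; 0; 0; 0; 0; 0; 0; 0; 0; 0; 0; 0; 0; 0; 0; 0];
  [:: 1; 0; 1; 0; 0; 0; 1; 0; 0; 0; 0; 0; 0; 0; 0; 0; 0; 0; 0; 0; 0; 0; 0; 1; 0; 0; 0; 0; 0; 0; 0; 0; 0; 0; 0; 0; 0; 0; 0; 0];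
  [:: 1; 0; 0; 1; 0; 0; 1; 0; 0; 0; 0; 0; 0; 0; 0; 0; 0; 0; 0; 0; 0; 0; 0; 0; 1; 0; 0; 0; 0; 0; 0; 0; 0; 0; 0; 0; 0; 0; 0; 0];
  [:: 0; 1; 0; 1; 0; 0; 1; 0; 0; 0; 0; 0; 0; 0; 0; 0; 0; 0; 0; 0; 0; 0; 0; 0; 0; 1; 0; 0; 0; 0; 0; 0; 0; 0; 0; 0; 0; 0; 0; 0];
  [:: 1; 0; 0; 0; 1; 0; 1; 0; 0; 0; 0; 0; 0; 0; 0; 0; 0; 0; 0; 0; 0; 0; 0; 0; 0; 0; 1; 0; 0; 0; 0; 0; 0; 0; 0; 0; 0; 0; 0; 0];
  [:: 1; 0; 1; 1; 1; 0; 1; 0; 0; 0; 0; 0; 0; 0; 0; 0; 0; 0; 0; 0; 0; 0; 0; 0; 0; 0; 0; 1; 0; 0; 0; 0; 0; 0; 0; 0; 0; 0; 0; 0];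
  [:: 0; 1; 1; 1; 1; 0; 1; 0; 0; 0; 0; 0; 0; 0; 0; 0; 0; 0; 0; 0; 0; 0; 0; 0; 0; 0; 0; 0; 1; 0; 0; 0; 0; 0; 0; 0; 0; 0; 0; 0];
  [:: 1; 1; 0; 1; 1; 0; 1; 0; 0; 0; 0; 0; 0; 0; 0; 0; 0; 0; 0; 0; 0; 0; 0; 0; 0; 0; 0; 0; 0; 1; 0; 0; 0; 0; 0; 0; 0; 0; 0; 0];
  [:: 1; 0; 0; 0; 0; 1; 1; 0; 0; 0; 0; 0; 0; 0; 0; 0; 0; 0; 0; 0; 0; 0; 0; 0; 0; 0; 0; 0; 0; 0; 1; 0; 0; 0; 0; 0; 0; 0; 0; 0];
  [:: 0; 1; 0; 0; 0; 1; 1; 0; 0; 0; 0; 0; 0; 0; 0; 0; 0; 0; 0; 0; 0; 0; 0; 0; 0; 0; 0; 0; 0; 0; 0; 1; 0; 0; 0; 0; 0; 0; 0; 0];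
  [:: 0; 0; 1; 0; 0; 1; 1; 0; 0; 0; 0; 0; 0; 0; 0; 0; 0; 0; 0; 0; 0; 0; 0; 0; 0; 0; 0; 0; 0; 0; 0; 0; 1; 0; 0; 0; 0; 0; 0; 0];
  [:: 1; 1; 0; 1; 0; 1; 1; 0; 0; 0; 0; 0; 0; 0; 0; 0; 0; 0; 0; 0; 0; 0; 0; 0; 0; 0; 0; 0; 0; 0; 0; 0; 0; 1; 0; 0; 0; 0; 0; 0];
  [:: 0; 0; 0; 0; 1; 1; 1; 0; 0; 0; 0; 0; 0; 0; 0; 0; 0; 0; 0; 0; 0; 0; 0; 0; 0; 0; 0; 0; 0; 0; 0; 0; 0; 0; 1; 0; 0; 0; 0; 0];
  [:: 0; 0; 1; 1; 1; 1; 1; 0; 0; 0; 0; 0; 0; 0; 0; 0; 0; 0; 0; 0; 0; 0; 0; 0; 0; 0; 0; 0; 0; 0; 0; 0; 0; 0; 0; 1; 0; 0; 0; 0];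
  [:: 1; 1; 1; 1; 1; 1; 1; 0; 0; 0; 0; 0; 0; 0; 0; 0; 0; 0; 0; 0; 0; 0; 0; 0; 0; 0; 0; 0; 0; 0; 0; 0; 0; 0; 0; 0; 1; 0; 0; 0];
  [:: 1; 1; 0; 0; 1; 1; 1; 0; 0; 0; 0; 0; 0; 0; 0; 0; 0; 0; 0; 0; 0; 0; 0; 0; 0; 0; 0; 0; 0; 0; 0; 0; 0; 0; 0; 0; 0; 1; 0; 0];
  [:: 0; 1; 0; 1; 1; 1; 1; 0; 0; 0; 0; 0; 0; 0; 0; 0; 0; 0; 0; 0; 0; 0; 0; 0; 0; 0; 0; 0; 0; 0; 0; 0; 0; 0; 0; 0; 0; 0; 1; 0];
  [:: 0; 1; 1; 0; 1; 1; 1; 0; 0; 0; 0; 0; 0; 0; 0; 0; 0; 0; 0; 0; 0; 0; 0; 0; 0; 0; 0; 0; 0; 0; 0; 0; 0; 0; 0; 0; 0; 0; 0; 1]].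

Definition W_c2 : seq nat := [:: 0; 0; 1; 0; 0; 0; 0; 1; 1; 0; 0; 1; 1; 0; 1; 0; 0; 1; 0; 0; 1; 1; 0; 1; 0; 0; 0; 1; 1; 0; 0; 0; 1; 0; 0; 1; 1; 0; 0; 1].

Definition P1_c2 : seq nat := [:: 0; 0; 0; 1; 0; 1; 1; 1; 2; 3; 3; 0; 2; 1; 1; 2; 2; 0; 2; 2; 1; 2; 1; 1; 2; 2; 1; 2; 2; 2; 2; 2; 2; 3; 2; 3; 3; 2; 3; 2].

Definition P2_c2 : seq nat := [:: 0; 0; 1; 0; 0; 0; 0; 1; 1; 0; 0; 1; 1; 0; 1; 0; 0; 1; 0; 0; 1; 1; 0; 1; 0; 0; 0; 1; 1; 0; 0; 0; 1; 0; 0; 1; 1; 0; 0; 1].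

Lemma c1_orth : chk_orth R_c1 T_c1. Proof. by vm_compute. Qed.
Lemma c1_Rid : chk_Rid R_c1. Proof. by vm_compute. Qed.
Lemma c1_Tid : chk_Tid T_c1. Proof. by vm_compute. Qed.
Lemma c1_Q : chk_Q R_c1 T_c1. Proof. by vm_compute. Qed.
Lemma c1_QT : chk_QT T_c1. Proof. by vm_compute. Qed.
Lemma c1_res : chk_res R_c1. Proof. by vm_compute. Qed.
Lemma c1_cols : chk_cols R_c1. Proof. by vm_compute. Qed.
Lemma c1_mem : chk_mem R_c1 T_c1 W_c1. Proof. by vm_compute. Qed.
Lemma c1_W : sumn [seq ew_coord (inZp (nth 0%N W_c1 k) : 'Z_4) | k <- iota 0 40] = 16.
Proof. by vm_compute. Qed.
Lemma c1_noP : chk_noP R_c1. Proof. by vm_compute. Qed.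

Lemma c2_orth : chk_orth R_c2 T_c2. Proof. by vm_compute. Qed.
Lemma c2_Rid : chk_Rid R_c2. Proof. by vm_compute. Qed.
Lemma c2_Tid : chk_Tid T_c2. Proof. by vm_compute. Qed.
Lemma c2_Q : chk_Q R_c2 T_c2. Proof. by vm_compute. Qed.
Lemma c2_QT : chk_QT T_c2. Proof. by vm_compute. Qed.
Lemma c2_res : chk_res R_c2. Proof. by vm_compute. Qed.
Lemma c2_cols : chk_cols R_c2. Proof. by vm_compute. Qed.
Lemma c2_mem : chk_mem R_c2 T_c2 W_c2. Proof. by vm_compute. Qed.
Lemma c2_W : sumn [seq ew_coord (inZp (nth 0%N W_c2 k) : 'Z_4) | k <- iota 0 40] = 16.
Proof. by vm_compute. Qed.
Lemma c2_m1 : chk_mem R_c2 T_c2 P1_c2. Proof. by vm_compute. Qed.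
Lemma c2_m2 : chk_mem R_c2 T_c2 P2_c2. Proof. by vm_compute. Qed.

Lemma oc_wvec W : oc (wvec W) = count (fun k => odd (nth 0 W k %% 4)) (iota 0 40).
Proof.
rewrite /oc (card_set_sum (fun k : 'I_40 => odd (val (wvec W ord0 k)))) -sumn_count.
rewrite -(sum_iota 40 (fun k => nat_of_bool (odd (nth 0 W k %% 4)))).
by apply: eq_bigr => k _; rewrite mxE vinZp.
Qed.

Lemma oc2_wvec W V : oc2 (wvec W) (wvec V) =
  count (fun k => odd (nth 0 W k %% 4) && odd (nth 0 V k %% 4)) (iota 0 40).
Proof.
rewrite /oc2 (card_set_sum (fun k : 'I_40 => odd (val (wvec W ord0 k)) && odd (val (wvec V ord0 k)))).
rewrite -sumn_count.
rewrite -(sum_iota 40 (fun k => nat_of_bool (odd (nth 0 W k %% 4) && odd (nth 0 V k %% 4)))).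
by apply: eq_bigr => k _; rewrite !mxE !vinZp.
Qed.

Theorem mainTheorem11 :
  exists C1 C2 : {set 'rV['Z_4]_40},
    [/\ extremal_typeII C1, extremal_typeII C2,
        residue_dim C1 = 7%N, residue_dim C2 = 7%N
      & ~ z4equiv C1 C2].
Proof.
exists (Code R_c1 T_c1), (Code R_c2 T_c2); split.
- exact: (extremal_Code c1_orth c1_Rid c1_Tid c1_Q c1_QT c1_res c1_cols c1_mem c1_W).
- exact: (extremal_Code c2_orth c2_Rid c2_Tid c2_Q c2_QT c2_res c2_cols c2_mem c2_W).
- exact: (residue_dim_Code c1_orth c1_Rid c1_Tid).
- exact: (residue_dim_Code c2_orth c2_Rid c2_Tid).
move=> Heq; apply: (noP6 c1_orth c1_Rid c1_Tid c1_noP).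
apply: (P6_transport Heq).
exists (wvec P1_c2), (wvec P2_c2); split.
- exact: wvec_mem c2_m1.
- exact: wvec_mem c2_m2.
- by rewrite oc_wvec; vm_compute.
- by rewrite oc_wvec; vm_compute.
by rewrite oc2_wvec; vm_compute.
Qed.
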